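(* Let $G$, $Z=\langle z\rangle$, $g_1,\dots,g_{2r}$, $S$ and $\Gamma=\mathrm{Cay}(G,S)$ be as in the context. Then $\Gamma$ is a $2$-arc-transitive cover of the $2r$-dimensional hypercube $\Sigma=\mathrm{Cay}(G/Z,\{Zg_1,\dots,Zg_{2r}\})$: the normal quotient $\Gamma_Z$ of $\Gamma$ with respect to the right-multiplication action of $Z$ is isomorphic to $\Sigma$, and $\Gamma$ and $\Gamma_Z$ both have valency $2r$.
   Context: Let $r\ge1$ and $G$ an extraspecial $2$-group of order $2^{2r+1}$ (i.e. $|Z(G)|=2$, $G/Z(G)\cong\mathbb{Z}_2^{2r}$), $Z=Z(G)=\langle z\rangle$ identified with $\mathbb{F}_2$, and $G/Z$ equipped with the quadratic form $Q(Zx)=x^2$ and bilinear form $B(Zx,Zy)=[x,y]$. Assume $\{Zg_1,\dots,Zg_{2r}\}$ is a symmetric basis of $G/Z$ ($Q(Zg_i)=0$, $B(Zg_i,Zg_j)=1$ for $i\ne j$); $S=\{g_1,\dots,g_{2r}\}$; $\mathrm{Cay}(H,T)$ has vertex set $H$ and edges $\{x,tx\}$. For $N\le\mathrm{Aut}(\Gamma)$ the normal quotient $\Gamma_N$ has the $N$-orbits as vertices, two orbits adjacent iff some edge of $\Gamma$ joins them; $\Gamma$ is a cover of $\Gamma_N$ if the valencies coincide. $\Gamma$ is $2$-arc-transitive if $\mathrm{Aut}(\Gamma)$ is transitive on triples $(u,v,w)$ with $u\sim v\sim w$, $u\ne w$. *)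

(* Defs.v *)
From mathcomp Require Import all_boot all_fingroup all_solvable.
Set Implicit Arguments.
Unset Strict Implicit.
Unset Printing Implicit Defensive.
Local Open Scope group_scope.

(* Simple graphs are given by an adjacency relation on a finite type
   (possibly restricted to a vertex set V). *)

(* Cayley graph Cay(H,T): edges {x, t x} with t in T; here H is the whole
   group type, so y ~ x iff y = t x for some t in T. *)
Definition cay_adj (gT : finGroupType) (T : {set gT}) : rel gT :=
  fun x y => y * x^-1 \in T.

Definition is_graph_aut (T : finType) (adj : rel T) (f : {perm T}) : Prop :=
  forall x y, adj (f x) (f y) = adj x y.

Definition two_arc (T : finType) (adj : rel T) (u v w : T) : bool :=
  [&& adj u v, adj v w & u != w].

Definition two_arc_transitive (T : finType) (adj : rel T) : Prop :=
  forall u v w u' v' w', two_arc adj u v w -> two_arc adj u' v' w' ->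
    exists f : {perm T}, [/\ is_graph_aut adj f, f u = u', f v = v' & f w = w'].

Definition valency_on (T : finType) (V : {set T}) (adj : rel T) (k : nat) : Prop :=
  forall x, x \in V -> #|[set y in V | adj x y]| = k.

Definition nquot_vertices (gT : finGroupType) (N : {set gT}) : {set {set gT}} :=
  [set orbit 'R N x | x : gT].

Definition nquot_adj (T : finType) (adj : rel T) : rel {set T} :=
  fun A B => [exists x in A, exists y in B, adj x y].

Definition graph_iso_on (T1 T2 : finType) (V1 : {set T1}) (adj1 : rel T1)
    (adj2 : rel T2) : Prop :=
  exists f : T1 -> T2,
    [/\ {in V1 &, injective f}, f @: V1 = [set: T2] &
        {in V1 &, forall a b, adj2 (f a) (f b) = adj1 a b}].

(* Main.v *)
Require Import Defs.
From mathcomp Require Import all_boot all_fingroup all_solvable.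
Set Implicit Arguments. Unset Strict Implicit. Unset Printing Implicit Defensive.
Local Open Scope group_scope.

Lemma count_ie (T : finType) (p : pred T) : count p (index_enum T) = #|p|.
Proof. rewrite cardE /enum_mem size_filter /index_enum. case: index_enum_key. by []. Qed.

Lemma cycle_cases (gT: finGroupType) (z x : gT) :
  z * z = 1 -> x \in <[z]> -> x = 1 \/ x = z.
Proof.
move=> zz /cycleP [k ->]. rewrite (divn_eq k 2) expgD mulnC expgM.
have z2: z ^+ 2 = 1 by rewrite expgS expg1.
rewrite z2 expg1n mul1g. have: k %% 2 < 2 by rewrite ltn_mod.
by case: (k %% 2) => [|[|//]] _ ; [left; exact: expg0 | right; exact: expg1].
Qed.

Lemma z_even (gT: finGroupType) (z : gT) m : z * z = 1 -> z ^+ (2 * m) = 1.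
Proof. by move=> zz; rewrite expgM expgS expg1 zz expg1n. Qed.

Lemma comm_cyc (gT: finGroupType) (z x y : gT) :
  (forall x, commute x z) -> x \in <[z]> -> commute y x.
Proof. by move=> cz /cycleP [k ->]; apply: commuteX. Qed.

Lemma conj_comm (gT: finGroupType) (x y : gT) : commute x y -> x ^ y = x.
Proof. by move=> c; rewrite conjgE c mulKg. Qed.

Lemma conj_cyc (gT: finGroupType) (z x y : gT) :
  (forall x, commute x z) -> x \in <[z]> -> x ^ y = x.
Proof. by move=> cz xz; apply: conj_comm; apply/commute_sym/(comm_cyc y cz xz). Qed.

Definition tv (gT : finGroupType) (h x : gT) := if [~ x, h] == 1 then x else x * h.

Lemma zinv (gT: finGroupType) (z : gT) : z * z = 1 -> z^-1 = z.
Proof. by move=> zz; rewrite -[z^-1]mul1g -zz mulgK. Qed.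

Lemma commM_c (gT: finGroupType) (z x y h : gT) :
  (forall x, commute x z) -> (forall x y, [~ x, y] \in <[z]>) ->
  [~ x * y, h] = [~ x, h] * [~ y, h].
Proof. by move=> cz cm; rewrite commMgJ (conj_cyc _ cz (cm _ _)). Qed.

Lemma tv_morph (gT: finGroupType) (z h x y : gT) :
  (forall x, commute x z) -> z * z = 1 -> (forall x y, [~ x, y] \in <[z]>) ->
  h * h = z -> tv h (x * y) = tv h x * tv h y.
Proof.
move=> cz zz cm hh; rewrite /tv (commM_c _ _ _ cz cm).
case: (eqVneq [~ x, h] 1) => ax; case: (eqVneq [~ y, h] 1) => ay.
- by rewrite ax ay mulg1 eqxx.
- by rewrite ax mul1g (negPf ay) mulgA.
- rewrite ay mulg1 (negPf ax) -!mulgA; congr (x * _).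
  by apply/commgP/eqP.
- have [ax'|->] := cycle_cases zz (cm x h); first by rewrite ax' eqxx in ax.
  have [by'|->] := cycle_cases zz (cm y h); first by rewrite by' eqxx in ay.
  rewrite zz eqxx.
  have ehy : h * y = y * h * z.
    by rewrite commgC -invgR; case: (cycle_cases zz (cm y h)) => e;
      [rewrite e eqxx in ay | rewrite e zinv].
  by rewrite -mulgA (mulgA h) ehy -!mulgA -(cz h) (mulgA h) hh zz mulg1.
Qed.

Lemma tv_inj (gT: finGroupType) (z h : gT) :
  (forall x, commute x z) -> (forall x y, [~ x, y] \in <[z]>) ->
  injective (tv h).
Proof.
move=> cz cm x y; rewrite /tv.
case: (eqVneq [~ x, h] 1) => ax; case: (eqVneq [~ y, h] 1) => ay //.
- move=> exy; move: ax; rewrite exy commMgJ commgg mulg1 (conj_cyc _ cz (cm _ _)).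
  by move=> e; rewrite e eqxx in ay.
- move=> exy; move: ay; rewrite -exy commMgJ commgg mulg1 (conj_cyc _ cz (cm _ _)).
  by move=> e; rewrite e eqxx in ax.
- exact: mulIg.
Qed.

Lemma tv1 (gT: finGroupType) (h : gT) : tv h 1 = 1.
Proof. by rewrite /tv comm1g eqxx. Qed.

Lemma comm_prod (gT: finGroupType) n (z : gT) (g : 'I_n -> gT) c (s : seq 'I_n) (P : pred 'I_n) :
  (forall x, commute x z) -> (forall x y, [~ x, y] \in <[z]>) ->
  (forall i j, i != j -> [~ g i, g j] = z) ->
  [~ g c, \prod_(k <- s | P k) g k] = z ^+ count (fun k => P k && (k != c)) s.
Proof.
move=> cz cm gc; elim: s => [|i s IH]; first by rewrite big_nil commg1.
rewrite big_cons /=; case: (P i) => /=; last by rewrite IH.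
rewrite commgMJ IH (conj_cyc _ cz (cm _ _)).
case: (eqVneq i c) => [->|ic] /=; first by rewrite commgg mulg1.
by rewrite eq_sym in ic; rewrite (gc _ _ ic) -expgSr.
Qed.

Lemma card_ne1 n (a : 'I_n) : #|[pred k | (k != a) && (k != a)]| = n.-1.
Proof. rewrite -[in RHS](card_ord n) -(cardC1 a); apply: eq_card => k; by rewrite !inE andbb. Qed.

Lemma card_ne2 n (a c : 'I_n) : a != c -> #|[pred k | (k != a) && (k != c)]| = n.-2.
Proof.
move=> ac; have := cardD1 a (predC1 c); rewrite cardC1 card_ord !inE ac add1n.
move=> e; rewrite -[n.-2]/(n.-1.-1) e /=; apply: eq_card => k; rewrite !inE.
by rewrite andbC.
Qed.

Lemma zpow12 (gT: finGroupType) (z : gT) r : (1 <= r)%N -> z * z = 1 ->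
  z ^+ (2 * r).-1 = z /\ z ^+ (2 * r).-2 = 1.
Proof.
case: r => // r' _ zz.
have -> : ((2 * r'.+1).-2 = 2 * r')%N by rewrite mulnS.
have -> : ((2 * r'.+1).-1 = (2 * r').+1)%N by rewrite mulnS.
by rewrite expgS z_even // mulg1.
Qed.

Definition good_aut (gT : finGroupType) n (g : 'I_n -> gT) (s : {perm 'I_n}) :=
  exists al : gT -> gT,
    [/\ injective al, {morph al : x y / x * y} & forall k, al (g k) = g (s k)].

Lemma good_mul (gT : finGroupType) n (g : 'I_n -> gT) s t :
  good_aut g s -> good_aut g t -> good_aut g (s * t).
Proof.
move=> [al [i1 m1 e1]] [be [i2 m2 e2]]; exists (be \o al); split.
- exact: inj_comp.
- by move=> x y /=; rewrite m1 m2.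
- by move=> k /=; rewrite e1 e2 permM.
Qed.

Lemma good_tperm (gT: finGroupType) r (z : gT) (g : 'I_(2 * r) -> gT) a b :
  (1 <= r)%N -> (forall x, commute x z) -> z * z = 1 -> z != 1 ->
  (forall x y, [~ x, y] \in <[z]>) -> (forall i, g i * g i = 1) ->
  (forall i j, i != j -> [~ g i, g j] = z) ->
  good_aut g (tperm a b).
Proof.
move=> r1 cz zz zn1 cm g2 gc.
case: (eqVneq a b) => [<-|ab].
  by exists id; split => // k; rewrite tperm1 perm1.
pose h := g a * g b.
pose u := \prod_(k < 2 * r | k != a) g k.
have ginv : forall i, (g i)^-1 = g i by move=> i; rewrite -[_^-1]mul1g -(g2 i) mulgK.
have [zpow1 zpow2] := zpow12 r1 zz.
have hh : h * h = z.
  by rewrite -(gc _ _ ab) /h /commg conjgE !ginv !mulgA.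
have ca : [~ g a, h] = z by rewrite /h commgMJ commgg conj1g mulg1 gc.
have cb : [~ g b, h] = z.
  by rewrite /h commgMJ commgg mul1g (conj_cyc _ cz (cm _ _)) gc // eq_sym.
have cc : forall c, c != a -> c != b -> [~ g c, h] = 1.
  by move=> c nca ncb; rewrite /h commgMJ (conj_cyc _ cz (cm _ _)) !gc // zz.
have ua : [~ g a, u] = z.
  rewrite /u (comm_prod _ _ _ cz cm gc) count_ie card_ne1.
  by rewrite zpow1.
have uc : forall c, c != a -> [~ g c, u] = 1.
  move=> c ca'; rewrite /u (comm_prod _ _ _ cz cm gc) count_ie card_ne2 1?eq_sym //.
exists (fun x => (tv h x) ^ u); split.
- by move=> x y /conjg_inj /(tv_inj cz cm).
- by move=> x y /=; rewrite (tv_morph _ _ cz zz cm hh) conjMg.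
move=> k; case: tpermP => [->|->|/eqP kna /eqP knb].
- rewrite /tv ca (negPf zn1) mulgA g2 mul1g conjg_mulR uc ?mulg1 //.
  by rewrite eq_sym.
- have eb : g b * h = g a * z.
    rewrite /h mulgA (commgC (g b)) gc 1?eq_sym // -mulgA -(cz (g b)) mulgA.
    by rewrite -(mulgA (g a)) g2 mulg1.
  rewrite /tv cb (negPf zn1) eb conjMg (conj_cyc _ cz (cycle_id z)).
  by rewrite conjg_mulR ua -mulgA zz mulg1.
- by rewrite /tv cc ?eqxx // conjg_mulR uc // mulg1.
Qed.

Lemma morph1_inv (gT : finGroupType) (al : gT -> gT) :
  {morph al : x y / x * y} -> al 1 = 1 /\ forall x, al x^-1 = (al x)^-1.
Proof.
move=> m; have a1 : al 1 = 1.
  by apply: (@mulgI _ (al 1)); rewrite -m !mulg1.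
split=> // x; apply/eqP; rewrite eq_sym eq_invg_mul -m mulgV a1; exact: eqxx.
Qed.

Lemma cay_2at (gT : finGroupType) n (g : 'I_n -> gT) :
  (forall a b, good_aut g (tperm a b)) -> (forall i, g i * g i = 1) ->
  two_arc_transitive (cay_adj [set g i | i : 'I_n]).
Proof.
move=> gt g2 u v w u' v' w'.
have step : forall x y, cay_adj [set g i | i : 'I_n] x y -> exists i, y = g i * x.
  move=> x y /imsetP [i _ e]; exists i; by rewrite -e mulgKV.
move=> /and3P [/step [i ->] /step [j ->] uw] /and3P [/step [i' ->] /step [j' ->] uw'].
have ij : i != j by apply: contraNneq uw => <-; rewrite mulgA g2 mul1g.
have ij' : i' != j' by apply: contraNneq uw' => <-; rewrite mulgA g2 mul1g.
pose t1 := tperm i i'; pose s := t1 * tperm (t1 j) j'.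
have [al [ali alm alg]] : good_aut g s by apply: good_mul; apply: gt.
have [al1 alV] := morph1_inv alm.
have si : s i = i'.
  rewrite permM /t1 tpermL tpermD //; last by rewrite eq_sym.
  by rewrite -[X in _ != X](tpermL i i') (inj_eq perm_inj) eq_sym.
have sj : s j = j' by rewrite permM tpermL.
pose F x := al (x * u^-1) * u'.
have Finj : injective F by move=> x y /mulIg /ali /mulIg.
exists (perm Finj); rewrite !permE /F; split.
- move=> x y; rewrite /cay_adj !permE /F invMg mulgA mulgK -alV -alm invMg mulgA mulgK.
  apply/imsetP/imsetP => [[k _ e]|[k _ e]].
  + exists (s^-1 k) => //; apply: ali; rewrite e alg permKV //.
  + by exists (s k) => //; rewrite e alg.
- by rewrite mulgV al1 mul1g.
- by rewrite mulgK alg si.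
- by rewrite (mulgA (g j)) mulgK alm !alg si sj mulgA.
Qed.

Lemma nZ (gT : finGroupType) (z x : gT) : (forall x, commute x z) -> x \in 'N(<[z]>).
Proof.
move=> cz; have : <[x]> \subset 'N(<[z]>).
  by rewrite norms_cycle conj_comm ?cycle_id //; apply/commute_sym/cz.
by move/subsetP; apply; apply: cycle_id.
Qed.

Lemma coset_eq (gT : finGroupType) (z x y : gT) : (forall x, commute x z) ->
  (coset <[z]> x = coset <[z]> y) <-> x *: <[z]> = y *: <[z]>.
Proof.
move=> cz; split => e.
  have := congr1 val e; rewrite /= !val_coset ?(nZ _ cz) //.
  by rewrite !norm_rlcoset ?(nZ _ cz).
apply: val_inj; rewrite /= !val_coset ?(nZ _ cz) //.
by rewrite !norm_rlcoset ?(nZ _ cz).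
Qed.

Lemma inV (gT : finGroupType) (z : gT) A :
  A \in nquot_vertices <[z]> <-> exists x, A = x *: <[z]>.
Proof.
rewrite /nquot_vertices; split => [/imsetP [x _ ->]| [x ->]].
  by exists x; rewrite orbitR.
by apply/imsetP; exists x => //; rewrite orbitR.
Qed.

Lemma phiE (gT : finGroupType) (z x : gT) : (forall x, commute x z) ->
  coset <[z]> (repr (x *: <[z]>)) = coset <[z]> x.
Proof.
move=> cz; apply/(coset_eq _ _ cz); apply/lcoset_eqP.
exact: (mem_repr _ (lcoset_refl _ _)).
Qed.

Lemma cosetMV (gT : finGroupType) (z x y : gT) : (forall x, commute x z) ->
  coset <[z]> (y * x^-1) = coset <[z]> y * (coset <[z]> x)^-1.
Proof.
move=> cz; rewrite morphM ?morphV ?groupV ?(nZ _ cz) //.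
Qed.

Lemma adjQ (gT : finGroupType) n (g : 'I_n -> gT) (z x y : gT) :
  (forall x, commute x z) ->
  nquot_adj (cay_adj [set g i | i : 'I_n]) (x *: <[z]>) (y *: <[z]>) =
  cay_adj [set coset <[z]> (g i) | i : 'I_n] (coset <[z]> x) (coset <[z]> y).
Proof.
move=> cz; rewrite /nquot_adj /cay_adj -cosetMV //.
apply/existsP/imsetP.
  move=> [x' /andP [xx' /existsP [y' /andP [yy' /imsetP [i _ e]]]]].
  exists i => //; rewrite -e (cosetMV _ _ cz) (cosetMV _ _ cz).
  have -> : coset <[z]> x' = coset <[z]> x.
    by apply/(coset_eq _ _ cz); apply/lcoset_eqP.
  have -> // : coset <[z]> y' = coset <[z]> y.
  by apply/(coset_eq _ _ cz); apply/lcoset_eqP.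
move=> [i _ /(coset_eq _ _ cz) e].
have m : y * x^-1 \in g i *: <[z]> by rewrite -e lcoset_refl.
exists ((g i)^-1 * y); apply/andP; split.
  rewrite mem_lcoset.
  have -> : x^-1 * ((g i)^-1 * y) = ((g i)^-1 * (y * x^-1)) ^ x.
    by rewrite conjgE !mulgA mulgKV.
  by rewrite memJ_norm ?(nZ _ cz) // -mem_lcoset.
apply/existsP; exists y; rewrite lcoset_refl /=.
by rewrite invMg invgK mulgA mulgV mul1g; apply/imsetP; exists i.
Qed.

Theorem theorem4p3 (gT : finGroupType) (r : nat) (z : gT)
    (g : 'I_(2 * r) -> gT) :
  (1 <= r)%N ->
  2.-group [set: gT] ->
  extraspecial [set: gT] ->
  #|[set: gT]| = (2 ^ (2 * r + 1))%N ->
  'Z([set: gT]) = <[z]> ->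
  (* symmetric basis: Q(Z g_i) = 0, B(Z g_i, Z g_j) = 1 for i <> j *)
  (forall i, g i ^+ 2 = 1) ->
  (forall i j, i != j -> [~ g i, g j] = z) ->
  (* {Z g_i} is a basis of the F_2-space G/Z: independent and spanning *)
  (forall I : {set 'I_(2 * r)},
      \prod_(i in I) coset <[z]> (g i) = 1 -> I = set0) ->
  <<[set coset <[z]> (g i) | i : 'I_(2 * r)]>> = [set: gT] / <[z]> ->
  let S := [set g i | i : 'I_(2 * r)] in
  let Gam := cay_adj S in
  let Sig := cay_adj [set coset <[z]> (g i) | i : 'I_(2 * r)] in
  [/\ two_arc_transitive Gam,
      (* Z acts by right multiplication as automorphisms of Gamma *)
      (forall n, n \in <[z]> -> forall x y, Gam (x * n) (y * n) = Gam x y),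
      graph_iso_on (nquot_vertices <[z]>) (nquot_adj Gam) Sig,
      valency_on [set: gT] Gam (2 * r) &
      valency_on (nquot_vertices <[z]>) (nquot_adj Gam) (2 * r)].
Proof.
move=> r1 _ [[_ hder] pZ] _ Zg gsq gc indep _ S Gam Sig.
have g2 : forall i, g i * g i = 1 by move=> i; rewrite -(gsq i) expgS expg1.
have cz : forall x, commute x z.
  move=> x; have : z \in 'Z([set: gT]) by rewrite Zg cycle_id.
  by case/centerP => _ /(_ x (in_setT x)) /commute_sym.
have cm : forall x y, [~ x, y] \in <[z]>.
  by move=> x y; rewrite -Zg -hder derg1 mem_commg ?in_setT.
have r2 : (2 <= 2 * r)%N by rewrite -{1}(muln1 2) leq_mul2l r1 orbT.
pose i0 : 'I_(2 * r) := Ordinal (ltn_trans (ltnSn 0) r2).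
pose i1 : 'I_(2 * r) := Ordinal r2.
have i01 : i0 != i1 by [].
have zV : z^-1 = z by rewrite -{1}(gc i0 i1 i01) invgR gc // eq_sym.
have zz : z * z = 1 by rewrite -{1}zV mulVg.
have zn1 : z != 1.
  by apply/eqP => z1; rewrite Zg z1 cycle1 cards1 in pZ.
have cinj : injective (fun i => coset <[z]> (g i)).
  move=> i j e; case: (eqVneq i j) => // ij; exfalso.
  have := indep [set i; j].
  rewrite (eq_bigr (fun _ => coset <[z]> (g i))) => [|k /set2P [->|->]] //.
  rewrite big_const cards2 ij /= mulg1 -morphM ?(nZ _ cz) // g2 morph1.
  by move=> /(_ erefl) /setP /(_ i); rewrite !inE eqxx.
split.
- by apply: cay_2at => // a b; apply: good_tperm.
- by move=> m _ x y; rewrite /Gam /cay_adj invMg mulgA mulgK.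
- exists (fun A => coset <[z]> (repr A)); split.
  + by move=> A B /inV[x ->] /inV[y ->]; rewrite !phiE // => /(coset_eq _ _ cz).
  + apply/setP => X; rewrite in_setT; apply/imsetP; exists (repr X *: <[z]>).
      by apply/inV; exists (repr X).
    by rewrite phiE // coset_reprK.
  + by move=> A B /inV[x ->] /inV[y ->]; rewrite !phiE // /Sig /Gam /S adjQ.
- move=> x _.
  have -> : [set y in [set: gT] | Gam x y] = S :* x.
    by apply/setP => y; rewrite !inE mem_rcoset.
  rewrite card_rcoset card_imset ?card_ord //.
  by move=> i j /(congr1 (coset <[z]>)) /cinj.
- move=> A /inV [x ->].
  rewrite -(card_in_imset (f := fun A => coset <[z]> (repr A))); last first.
    move=> B C; rewrite !inE => /andP[/inV[y ->] _] /andP[/inV[w ->] _].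
    by rewrite !phiE // => /(coset_eq _ _ cz).
  have -> : (fun A => coset <[z]> (repr A)) @: [set B in nquot_vertices <[z]> |
      nquot_adj Gam (x *: <[z]>) B] = 
     [set coset <[z]> (g i) | i : 'I_(2 * r)] :* coset <[z]> x. 
    apply/setP => Y; rewrite mem_rcoset; apply/imsetP/idP.
      move=> [B]; rewrite inE => /andP [/inV [y ->] ad] ->.
      rewrite phiE //; move: ad; rewrite /Gam /S adjQ //.
    move=> sY; exists (repr Y *: <[z]>); last by rewrite phiE // coset_reprK.
    rewrite inE; apply/andP; split; first by apply/inV; exists (repr Y).
    by rewrite /Gam /S adjQ // coset_reprK.
  by rewrite card_rcoset card_imset ?card_ord.
Qed.
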